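(* Let $\gamma\in[0,1]$ and $V_p^->0$ be constants, and let $V_p>0$, $c>0$. Define $$p(v,V_p,c)=(1-\gamma)\Big(\frac{V_p}{V_p^-}\Big)^2v+\gamma v^3-(v+c)^3,$$ and suppose that $p(\cdot,V_p,c)$ has two positive zeros $0<v_1<v_2$. Consider the autonomous system $$\dot v=(1-\gamma)\Big(\frac{V_p}{V_p^-}\Big)^2m^3-(1-\gamma m^3)v^2,\qquad \dot m=(1-m)v-cm .$$ If $a=(a_1,a_2)$ and $b=(b_1,b_2)$ satisfy $$v_1<a_1<v_2,\qquad \sqrt[3]{\frac{a_1^2}{(1-\gamma)(V_p/V_p^-)^2+\gamma a_1^2}}<a_2<\frac{a_1}{a_1+c},$$ and $$v_2<b_1,\qquad \frac{b_1}{b_1+c}<b_2<\sqrt[3]{\frac{b_1^2}{(1-\gamma)(V_p/V_p^-)^2+\gamma b_1^2}},$$ then the box $K_{a,b}=[a_1,b_1]\times[a_2,b_2]$ is forward invariant under the flow of this system.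
   Context: The positive equilibria of the system are the points $(v,m)$ with $v>0$, $p(v,V_p,c)=0$ and $m=v/(v+c)$. Here $v$ is the dimensionless wind speed, $m$ the moisture, $V_p$ the maximum potential velocity (with $V_p^-$ a fixed reference value), $c$ the dimensionless wind shear. *)

(* Defs.v *)
From Stdlib Require Import Reals Lra.
From Coquelicot Require Import Coquelicot.
Open Scope R_scope.

Definition cbrt (x : R) : R := Rpower x (/ 3).

Definition pol (g Vpm Vp c v : R) : R :=
  (1 - g) * (Vp / Vpm) ^ 2 * v + g * v ^ 3 - (v + c) ^ 3.

Definition field_v (g Vpm Vp v m : R) : R :=
  (1 - g) * (Vp / Vpm) ^ 2 * m ^ 3 - (1 - g * m ^ 3) * v ^ 2.
Definition field_m (c v m : R) : R := (1 - m) * v - c * m.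

Definition mbound (g Vpm Vp v : R) : R :=
  cbrt (v ^ 2 / ((1 - g) * (Vp / Vpm) ^ 2 + g * v ^ 2)).

Definition in_box (a1 a2 b1 b2 x y : R) : Prop :=
  a1 <= x <= b1 /\ a2 <= y <= b2.

Definition is_solution (g Vpm Vp c T : R) (v m : R -> R) : Prop :=
  forall t, 0 <= t < T ->
    is_derive v t (field_v g Vpm Vp (v t) (m t)) /\
    is_derive m t (field_m c (v t) (m t)).

Definition forward_invariant_box (g Vpm Vp c a1 a2 b1 b2 : R) : Prop :=
  forall (T : R) (v m : R -> R),
    is_solution g Vpm Vp c T v m ->
    in_box a1 a2 b1 b2 (v 0) (m 0) ->
    forall t, 0 <= t < T -> in_box a1 a2 b1 b2 (v t) (m t).

(* Main.v *)
Require Import Defs.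
From Stdlib Require Import Reals Lra Psatz Classical.
From Coquelicot Require Import Coquelicot.
Open Scope R_scope.

Lemma cont_of_der f s l : derivable_pt_lim f s l ->
  forall e, 0 < e -> exists d, 0 < d /\ forall h, Rabs h < d -> Rabs (f (s+h) - f s) < e.
Proof.
  intros H e He.
  destruct (H 1 Rlt_0_1) as [del Hd].
  exists (Rmin del (e / (Rabs l + 1))). split.
  { apply Rmin_pos. apply cond_pos. apply Rdiv_lt_0_compat; [lra| pose proof (Rabs_pos l); lra]. }
  intros h Hh.
  destruct (Req_dec h 0) as [->|Hn].
  { rewrite Rplus_0_r, Rminus_diag, Rabs_R0. lra. }
  assert (Hh1 : Rabs h < del) by (eapply Rlt_le_trans; [exact Hh| apply Rmin_l]).
  assert (Hh2 : Rabs h < e / (Rabs l + 1)) by (eapply Rlt_le_trans; [exact Hh| apply Rmin_r]).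
  specialize (Hd h Hn Hh1).
  set (q := (f (s + h) - f s) / h) in *.
  assert (Eq : f (s+h) - f s = h * q) by (unfold q; field; auto).
  rewrite Eq, Rabs_mult.
  assert (Rabs q <= Rabs l + 1).
  { replace q with ((q - l) + l) by ring.
    eapply Rle_trans; [apply Rabs_triang|]. lra. }
  pose proof (Rabs_pos l). pose proof (Rabs_pos h).
  apply Rmult_lt_compat_r with (r := Rabs l + 1) in Hh2; [|lra].
  unfold Rdiv in Hh2. rewrite Rmult_assoc, Rinv_l in Hh2 by lra.
  nra.
Qed.

Lemma lower_stay f s l lo : derivable_pt_lim f s l -> lo <= f s ->
  (f s = lo -> 0 < l) -> exists d, 0 < d /\ forall h, 0 < h < d -> lo <= f (s+h).
Proof.
  intros H Hle Hb.
  destruct (Req_dec (f s) lo) as [E|E].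
  - specialize (Hb E).
    destruct (H l Hb) as [del Hd]. exists del. split. apply cond_pos.
    intros h [h0 h1].
    assert (Hn : h <> 0) by lra.
    assert (Ha : Rabs h < del) by (rewrite Rabs_right; lra).
    specialize (Hd h Hn Ha).
    apply Rabs_def2 in Hd. destruct Hd as [_ Hd].
    assert (0 < (f (s + h) - f s) / h) by lra.
    assert (Eq : f (s+h) - f s = h * ((f (s + h) - f s) / h)) by (field; auto).
    nra.
  - destruct (cont_of_der f s l H (f s - lo)) as [d [Hd0 Hd]]; [lra|].
    exists d. split; auto. intros h [h0 h1].
    assert (Ha : Rabs h < d) by (rewrite Rabs_right; lra).
    specialize (Hd h Ha). apply Rabs_def2 in Hd. lra.
Qed.

Lemma stay f s l lo hi : derivable_pt_lim f s l -> lo <= f s <= hi ->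
  (f s = lo -> 0 < l) -> (f s = hi -> l < 0) ->
  exists d, 0 < d /\ forall h, 0 < h < d -> lo <= f (s+h) <= hi.
Proof.
  intros H [H1 H2] Hl Hh.
  destruct (lower_stay f s l lo H H1 Hl) as [d1 [P1 Q1]].
  assert (H' : derivable_pt_lim (fun x => - f x) s (- l)).
  { apply (derivable_pt_lim_opp f s l H). }
  destruct (lower_stay (fun x => - f x) s (-l) (-hi) H') as [d2 [P2 Q2]]; [lra| intros; lra |].
  exists (Rmin d1 d2). split. apply Rmin_pos; auto.
  intros h [h0 h1].
  assert (h < d1) by (eapply Rlt_le_trans; [exact h1|apply Rmin_l]).
  assert (h < d2) by (eapply Rlt_le_trans; [exact h1|apply Rmin_r]).
  split. apply Q1; lra. assert (- hi <= - f (s+h)) by (apply Q2; lra). lra.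
Qed.

Lemma closed_lim f s l lo hi : derivable_pt_lim f s l -> 0 < s ->
  (forall u, 0 <= u < s -> lo <= f u <= hi) -> lo <= f s <= hi.
Proof.
  intros H Hs Hu.
  destruct (Rle_dec lo (f s)) as [A|A]; destruct (Rle_dec (f s) hi) as [B|B]; auto.
  - destruct (cont_of_der f s l H (f s - hi)) as [d [Hd0 Hd]]; [lra|].
    set (h := - (Rmin d s) / 2).
    assert (0 < Rmin d s) by (apply Rmin_pos; lra).
    assert (Rmin d s <= d) by apply Rmin_l. assert (Rmin d s <= s) by apply Rmin_r.
    assert (Ha : Rabs h < d) by (unfold h; rewrite Rabs_left; lra).
    specialize (Hd h Ha). apply Rabs_def2 in Hd.
    assert (lo <= f (s+h) <= hi) by (apply Hu; unfold h; lra). lra.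
  - destruct (cont_of_der f s l H (lo - f s)) as [d [Hd0 Hd]]; [lra|].
    set (h := - (Rmin d s) / 2).
    assert (0 < Rmin d s) by (apply Rmin_pos; lra).
    assert (Rmin d s <= d) by apply Rmin_l. assert (Rmin d s <= s) by apply Rmin_r.
    assert (Ha : Rabs h < d) by (unfold h; rewrite Rabs_left; lra).
    specialize (Hd h Ha). apply Rabs_def2 in Hd.
    assert (lo <= f (s+h) <= hi) by (apply Hu; unfold h; lra). lra.
  - destruct (cont_of_der f s l H (f s - hi)) as [d [Hd0 Hd]]; [lra|].
    set (h := - (Rmin d s) / 2).
    assert (0 < Rmin d s) by (apply Rmin_pos; lra).
    assert (Rmin d s <= d) by apply Rmin_l. assert (Rmin d s <= s) by apply Rmin_r.
    assert (Ha : Rabs h < d) by (unfold h; rewrite Rabs_left; lra).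
    specialize (Hd h Ha). apply Rabs_def2 in Hd.
    assert (lo <= f (s+h) <= hi) by (apply Hu; unfold h; lra). lra.
Qed.

Lemma cbrt_pos x : 0 < cbrt x.
Proof. unfold cbrt, Rpower. apply exp_pos. Qed.

Lemma cbrt_cube x : 0 < x -> cbrt x ^ 3 = x.
Proof.
  intro Hx. unfold cbrt.
  rewrite <- Rpower_pow by (unfold Rpower; apply exp_pos).
  rewrite Rpower_mult. replace (/3 * INR 3) with 1 by (simpl; field).
  apply Rpower_1; auto.
Qed.

Lemma cube_lt x y : 0 <= x -> x < y -> x ^ 3 < y ^ 3.
Proof. intros.
  assert (y ^ 3 - x ^ 3 = (y - x) * (y*y + x*y + x*x)) by ring.
  assert (0 < y*y + x*y + x*x) by (assert (0 < y) by lra; nra).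
  assert (0 < (y - x) * (y*y + x*y + x*x)) by (apply Rmult_lt_0_compat; lra).
  lra. Qed.

Theorem proposition3p7 (g Vpm Vp c v1 v2 a1 a2 b1 b2 : R) :
  0 <= g <= 1 -> 0 < Vpm -> 0 < Vp -> 0 < c ->
  0 < v1 -> v1 < v2 ->
  pol g Vpm Vp c v1 = 0 -> pol g Vpm Vp c v2 = 0 ->
  v1 < a1 < v2 ->
  mbound g Vpm Vp a1 < a2 < a1 / (a1 + c) ->
  v2 < b1 ->
  b1 / (b1 + c) < b2 < mbound g Vpm Vp b1 ->
  forward_invariant_box g Vpm Vp c a1 a2 b1 b2.
Proof.
  intros Hg HVpm HVp Hc Hv1 Hv12 _ _ Ha1 Ha2 Hb1 Hb2.
  set (K := (1 - g) * (Vp / Vpm) ^ 2).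
  assert (HK : 0 <= K).
  { unfold K. apply Rmult_le_pos; [lra|]. apply pow2_ge_0. }
  assert (HD : forall v, 0 < v -> 0 < K + g * v ^ 2).
  { intros v Hv. destruct (Req_dec g 1) as [->|Hn].
    - nra.
    - assert (0 < K). { unfold K. apply Rmult_lt_0_compat; [lra|].
        apply pow_lt. apply Rdiv_lt_0_compat; lra. }
      nra. }
  assert (Hfv : forall v m, field_v g Vpm Vp v m = (K + g * v ^ 2) * m ^ 3 - v ^ 2).
  { intros; unfold field_v, K; ring. }
  assert (Ha1p : 0 < a1) by lra.
  assert (Hb1p : 0 < b1) by lra.
  pose proof (HD a1 Ha1p) as Da. pose proof (HD b1 Hb1p) as Db.
  assert (A3 : a1 ^ 2 < (K + g * a1 ^ 2) * a2 ^ 3).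
  { destruct Ha2 as [Ha2 _]. unfold mbound in Ha2. fold K in Ha2.
    pose proof (cbrt_pos (a1 ^ 2 / (K + g * a1 ^ 2))) as P.
    pose proof (cbrt_cube (a1 ^ 2 / (K + g * a1 ^ 2))) as C.
    assert (0 < a1 ^ 2 / (K + g * a1 ^ 2)) by (apply Rdiv_lt_0_compat; nra).
    specialize (C H).
    pose proof (cube_lt _ _ (Rlt_le _ _ P) Ha2). rewrite C in H0.
    apply Rmult_lt_compat_l with (r := K + g * a1 ^ 2) in H0; auto.
    field_simplify in H0; lra. }
  assert (Ha2p : 0 < a2).
  { destruct Ha2 as [Ha2 _]. unfold mbound in Ha2. pose proof (cbrt_pos (a1 ^ 2 / ((1 - g) * (Vp / Vpm) ^ 2 + g * a1 ^ 2))). lra. }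
  assert (Ha2c : a2 * (a1 + c) < a1).
  { destruct Ha2 as [_ H]. apply Rmult_lt_compat_r with (r := a1 + c) in H; [|lra].
    field_simplify in H; lra. }
  assert (Hb2c : b1 < b2 * (b1 + c)).
  { destruct Hb2 as [H _]. apply Rmult_lt_compat_r with (r := b1 + c) in H; [|lra].
    field_simplify in H; lra. }
  assert (Hb2p : 0 < b2) by nra.
  assert (B3 : (K + g * b1 ^ 2) * b2 ^ 3 < b1 ^ 2).
  { destruct Hb2 as [_ Hb]. unfold mbound in Hb. fold K in Hb.
    pose proof (cbrt_cube (b1 ^ 2 / (K + g * b1 ^ 2))) as C.
    assert (0 < b1 ^ 2 / (K + g * b1 ^ 2)) by (apply Rdiv_lt_0_compat; nra).
    specialize (C H).
    pose proof (cube_lt _ _ (Rlt_le _ _ Hb2p) Hb). rewrite C in H0.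
    apply Rmult_lt_compat_l with (r := K + g * b1 ^ 2) in H0; auto.
    field_simplify in H0; lra. }
  assert (Hab2 : a2 < b2).
  { destruct (Rlt_le_dec a2 b2) as [|L]; auto. exfalso.
    assert (b2 * (b1 + c) <= a2 * (b1 + c)) by (apply Rmult_le_compat_r; lra).
    assert (a2 * (b1 - a1) > b1 - a1) by lra.
    assert (1 < a2).
    { destruct (Rle_dec a2 1) as [L2|]; [|lra].
      assert (a2 * (b1 - a1) <= 1 * (b1 - a1)) by (apply Rmult_le_compat_r; lra). lra. }
    assert (1 * (a1 + c) < a2 * (a1 + c)) by (apply Rmult_lt_compat_r; lra). lra. }
  assert (S1 : forall m, a2 <= m <= b2 -> 0 < field_v g Vpm Vp a1 m).
  { intros m Hm. rewrite Hfv.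
    assert (a2 ^ 3 <= m ^ 3) by (destruct (Req_dec a2 m); [subst; lra| left; apply cube_lt; lra]).
    nra. }
  assert (S2 : forall m, a2 <= m <= b2 -> field_v g Vpm Vp b1 m < 0).
  { intros m Hm. rewrite Hfv.
    assert (m ^ 3 <= b2 ^ 3) by (destruct (Req_dec m b2); [subst; lra| left; apply cube_lt; lra]).
    nra. }
  assert (S3 : forall v, a1 <= v <= b1 -> 0 < field_m c v a2).
  { intros v Hv. unfold field_m. assert (a2 < 1) by nra. nra. }
  assert (S4 : forall v, a1 <= v <= b1 -> field_m c v b2 < 0).
  { intros v Hv. unfold field_m. destruct (Rle_dec 1 b2); nra. }
  intros T v m Hsol H0 t0 Ht0.
  destruct (classic (in_box a1 a2 b1 b2 (v t0) (m t0))) as [OK|NOK]; auto.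
  exfalso.
  set (E := fun s => 0 <= s <= t0 /\ forall u, 0 <= u <= s -> in_box a1 a2 b1 b2 (v u) (m u)).
  assert (Eb : bound E). { exists t0. intros s [Hs _]. lra. }
  assert (Ee : exists x, E x).
  { exists 0. split. lra. intros u Hu. replace u with 0 by lra. auto. }
  destruct (completeness E Eb Ee) as [s [Hub Hlub]].
  assert (Hs0 : 0 <= s) by (apply Hub; destruct Ee; unfold E; split; [lra|]; intros u Hu; replace u with 0 by lra; auto).
  assert (Hst : s <= t0) by (apply Hlub; intros x [Hx _]; lra).
  assert (Hbefore : forall u, 0 <= u < s -> in_box a1 a2 b1 b2 (v u) (m u)).
  { intros u Hu. destruct (classic (exists x, E x /\ u <= x)) as [[x [[_ Hx] Hux]]|Hn].
    - apply Hx. lra.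
    - assert (s <= u); [|lra]. apply Hlub. intros x Ex.
      destruct (Rle_dec x u); auto. exfalso. apply Hn. exists x. split; auto; lra. }
  assert (HsT : 0 <= s < T) by lra.
  destruct (Hsol s HsT) as [Dv Dm].
  apply is_derive_Reals in Dv. apply is_derive_Reals in Dm.
  assert (Hin : in_box a1 a2 b1 b2 (v s) (m s)).
  { destruct (Req_dec s 0) as [->|Hn]; auto.
    split.
    - apply (closed_lim v s _ _ _ Dv); [lra|]. intros u Hu. apply (Hbefore u Hu).
    - apply (closed_lim m s _ _ _ Dm); [lra|]. intros u Hu. apply (Hbefore u Hu). }
  assert (Hslt : s < t0). { destruct (Req_dec s t0) as [->|]; [contradiction|lra]. }
  destruct Hin as [Hvs Hms].
  destruct (stay v s _ a1 b1 Dv Hvs) as [d1 [P1 Q1]].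
  { intro E1. rewrite E1. apply S1; auto. }
  { intro E1. rewrite E1. apply S2; auto. }
  destruct (stay m s _ a2 b2 Dm Hms) as [d2 [P2 Q2]].
  { intro E1. rewrite E1. apply S3; auto. }
  { intro E1. rewrite E1. apply S4; auto. }
  set (h := Rmin (Rmin d1 d2) (t0 - s) / 2).
  assert (0 < Rmin (Rmin d1 d2) (t0 - s)) by (repeat apply Rmin_pos; lra).
  assert (Rmin (Rmin d1 d2) (t0 - s) <= Rmin d1 d2) by apply Rmin_l.
  assert (Rmin (Rmin d1 d2) (t0 - s) <= t0 - s) by apply Rmin_r.
  assert (Rmin d1 d2 <= d1) by apply Rmin_l.
  assert (Rmin d1 d2 <= d2) by apply Rmin_r.
  assert (E (s + h)).
  { split. unfold h; lra.
    intros u Hu.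
    destruct (Rlt_le_dec u s) as [L|L].
    - apply Hbefore; lra.
    - destruct (Req_dec u s) as [->|Hne].
      + split; auto.
      + replace u with (s + (u - s)) by ring.
        split; [apply Q1 | apply Q2]; unfold h in *; lra. }
  assert (s + h <= s) by (apply Hub; auto).
  unfold h in *; lra.
Qed.
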